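(* Let $\Omega=\mathbb{R}^{\mathbb{N}}$ with canonical process $(X_t)_{t\in\mathbb{N}}$, natural filtration $\mathcal{F}_t=\sigma(X_1,\dots,X_t)$ ($\mathcal{F}_0$ trivial), $\mathcal{F}=\sigma(\bigcup_t\mathcal{F}_t)$. Let $\mathcal{P}^\dagger$ be the set of all probability measures $\mathbb{P}$ on $\mathcal{F}$ such that for every $t\in\mathbb{N}$ the conditional mean $\mu_t=\mathbb{E}_{\mathbb{P}}[X_t\mid\mathcal{F}_{t-1}]$ exists and is finite, $\sum_{i=1}^t\mu_i\le0$ $\mathbb{P}$-a.s., and $\mathbb{E}_{\mathbb{P}}[e^{\lambda(X_t-\mu_t)}\mid\mathcal{F}_{t-1}]\le e^{\lambda^2/2}$ $\mathbb{P}$-a.s. for all $\lambda\in\mathbb{R}$. Let $A^{>0}=\big\{\limsup_{t\to\infty}\frac1t\sum_{s=1}^tX_s>0\big\}$. Then $\mu^*(A^{>0})=0$ (with $\mu^*$ computed with respect to $\mathcal{P}^\dagger$); in particular this also holds for the smaller family $\mathcal{P}^{\le0}\subseteq\mathcal{P}^\dagger$ in which each $\mu_t\le0$.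
   Context: Stopping times are with respect to the filtration above (values in $\mathbb{N}_0\cup\{\infty\}$) and $\mathcal{T}$ is the set of all stopping times. Inverse-capital measure with respect to a family $\mathcal{Q}$: $\mu^*(B) = \inf_{\tau\in\mathcal{T}:\, B\subseteq\{\tau<\infty\}} \sup_{\mathbb{P}\in\mathcal{Q}} \mathbb{P}(\tau<\infty)$ for $B\subseteq\Omega$. *)

(* Defs.v *)
From HB Require Import structures.
From mathcomp Require Import all_boot all_order all_algebra.
From mathcomp Require Import all_classical all_reals all_analysis.
From mathcomp Require Import measurable_realfun.
Set Implicit Arguments. Unset Strict Implicit. Unset Printing Implicit Defensive.
Import Order.TTheory GRing.Theory Num.Theory.
Local Open Scope classical_set_scope.
Local Open Scope ring_scope.

(* Omega = R^N.  A path w : nat -> R encodes X_t = w (t-1), t = 1,2,... *)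
Definition Omega0 (R : realType) := nat -> R.
HB.instance Definition _ (R : realType) := gen_eqMixin (Omega0 R).
HB.instance Definition _ (R : realType) := gen_choiceMixin (Omega0 R).
HB.instance Definition _ (R : realType) := isPointed.Build (Omega0 R) (fun _ => 0%R).

Section Defs.
Variable R : realType.
Local Notation Omega := (Omega0 R).

Definition X (t : nat) (w : Omega) : R := w t.-1.

Definition gen (t : nat) : set (set Omega) :=
  [set B | exists s, exists A : set R,
      [/\ (1 <= s)%N, (s <= t)%N, measurable A & B = X s @^-1` A]].

(* natural filtration; F_0 = sigma(empty) = {set0, setT} is trivial *)
Definition F (t : nat) : set (set Omega) := <<s gen t >>.

Definition genInf : set (set Omega) := \bigcup_t gen t.

Definition OmegaM : measurableType _ := @g_sigma_algebraType Omega genInf.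

Definition PM := probability OmegaM R.

Definition emeasurable_wrt (G : set (set Omega)) (f : Omega -> \bar R) :=
  forall B : set (\bar R), measurable B -> G (f @^-1` B).

Definition rmeasurable_wrt (G : set (set Omega)) (f : Omega -> R) :=
  forall B : set R, measurable B -> G (f @^-1` B).

(* g is a version of the conditional expectation E_P[Y | G] of a nonnegative
   (extended-real) variable Y; for nonnegative Y it always exists, with values in [0, +oo] *)
Definition is_condexp_nonneg (P : PM) (G : set (set Omega))
    (Y g : Omega -> \bar R) :=
  [/\ emeasurable_wrt G g, (forall w, (0 <= g w)%E) &
      forall B, G B -> (\int[P]_(w in (B : set OmegaM)) Y w = \int[P]_(w in B) g w)%E].

Definition condexp_le (P : PM) (G : set (set Omega)) (Y : Omega -> \bar R) (c : \bar R) :=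
  exists g, is_condexp_nonneg P G Y g /\ {ae P, forall w : OmegaM, (g w <= c)%E}.

(* m is a version of the (generalized) conditional expectation E_P[Y | G],
   which exists and is finite: E[Y^+|G] and E[Y^-|G] are a.s. finite and
   m = E[Y^+|G] - E[Y^-|G] a.s. *)
Definition is_condmean (P : PM) (G : set (set Omega)) (Y m : Omega -> R) :=
  rmeasurable_wrt G m /\
  exists gp gm : Omega -> \bar R,
    [/\ is_condexp_nonneg P G (fun w => (Num.max (Y w) 0)%:E) gp,
        is_condexp_nonneg P G (fun w => (Num.max (- Y w) 0)%:E) gm,
        {ae P, forall w : OmegaM, gp w < +oo}%E,
        {ae P, forall w : OmegaM, gm w < +oo}%E &
        {ae P, forall w : OmegaM, (m w)%:E = (gp w - gm w)%E}].

(* P in P^dagger; mu t is mu_t = E[X_t | F_{t-1}] (mu 0 unused) *)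
Definition Pdagger : set PM :=
  [set P | exists mu : nat -> Omega -> R, forall t, (1 <= t)%N ->
     [/\ is_condmean P (F t.-1) (X t) (mu t),
         {ae P, forall w : OmegaM, \sum_(1 <= i < t.+1) mu i w <= 0} &
         forall lam : R, condexp_le P (F t.-1)
            (fun w => (expR (lam * (X t w - mu t w)))%:E) (expR (lam ^+ 2 / 2))%:E]].

Definition Ple0 : set PM :=
  [set P | exists mu : nat -> Omega -> R, forall t, (1 <= t)%N ->
     [/\ is_condmean P (F t.-1) (X t) (mu t),
         {ae P, forall w : OmegaM, mu t w <= 0} &
         forall lam : R, condexp_le P (F t.-1)
            (fun w => (expR (lam * (X t w - mu t w)))%:E) (expR (lam ^+ 2 / 2))%:E]].

(* stopping times with values in N_0 U {oo}; None = oo *)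
Definition stopping_time (tau : Omega -> option nat) :=
  forall n, F n [set w | tau w = Some n].

Definition finite_tau (tau : Omega -> option nat) : set Omega :=
  [set w | tau w != None].

Definition mu_star (Q : set PM) (B : set Omega) : \bar R :=
  ereal_inf [set x | exists tau, [/\ stopping_time tau, B `<=` finite_tau tau &
     x = ereal_sup [set y | exists P : PM, Q P /\ y = P (finite_tau tau : set OmegaM)]]].

Definition Apos : set Omega :=
  [set w | (0 < limn_esup (fun n : nat =>
      ((n.+1)%:R^-1 * \sum_(1 <= s < n.+2) X s w)%:E))%E].

End Defs.

(* Main.v *)
Require Import Defs.
From HB Require Import structures.
From mathcomp Require Import all_boot all_order all_algebra.
From mathcomp Require Import all_classical all_reals all_analysis.
From mathcomp Require Import measurable_realfun.
From mathcomp Require Import ring lra.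
Set Implicit Arguments. Unset Strict Implicit. Unset Printing Implicit Defensive.
Import Order.TTheory GRing.Theory Num.Theory.
Local Open Scope classical_set_scope.
Local Open Scope ring_scope.

Section S.
Variable R : realType.
Local Notation Omega := (Omega0 R).
Definition TG (t : nat) : measurableType _ := @g_sigma_algebraType Omega (@gen R t).
Local Notation OM := (OmegaM R).

Lemma gen_mono s t : (s <= t)%N -> @gen R s `<=` @gen R t.
Proof. move=> st B [u [A [u1 ut mA ->]]]; exists u, A; split => //; exact: leq_trans st. Qed.

Lemma F_mono s t : (s <= t)%N -> @F R s `<=` @F R t.
Proof. by move=> st; apply: sub_sigma_algebra2; exact: gen_mono. Qed.

Lemma F_OM t (A : set Omega) : @F R t A -> measurable (A : set OM).
Proof.
apply: sub_sigma_algebra2 => B gB; by exists t.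
Qed.

Lemma TG_OM t (f : Omega -> R) : measurable_fun setT (f : TG t -> R) ->
  measurable_fun setT (f : OM -> R).
Proof.
move=> mf _ B mB; rewrite setTI; apply: (@F_OM t).
by have := mf measurableT B mB; rewrite setTI.
Qed.

Lemma TG_OMe t (f : Omega -> \bar R) : measurable_fun setT (f : TG t -> \bar R) ->
  measurable_fun setT (f : OM -> \bar R).
Proof.
move=> mf _ B mB; rewrite setTI; apply: (@F_OM t).
by have := mf measurableT B mB; rewrite setTI.
Qed.

Lemma rmeas_TG t (f : Omega -> R) : rmeasurable_wrt (@F R t) f ->
  measurable_fun setT (f : TG t -> R).
Proof. by move=> mf _ B mB; rewrite setTI; exact: mf. Qed.

Lemma emeas_TG t (f : Omega -> \bar R) : emeasurable_wrt (@F R t) f ->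
  measurable_fun setT (f : TG t -> \bar R).
Proof. by move=> mf _ B mB; rewrite setTI; exact: mf. Qed.

Lemma TG_mono s t (f : Omega -> R) : (s <= t)%N -> measurable_fun setT (f : TG s -> R) ->
  measurable_fun setT (f : TG t -> R).
Proof.
move=> st mf _ B mB; rewrite setTI; apply: (F_mono st).
by have := mf measurableT B mB; rewrite setTI.
Qed.

Lemma mcoord t i : (i < t)%N -> measurable_fun setT ((fun w : Omega => w i) : TG t -> R).
Proof.
move=> it _ B mB; rewrite setTI; apply: sub_sigma_algebra.
by exists i.+1, B; split.
Qed.

Lemma mcoordOM i : measurable_fun setT ((fun w : Omega => w i) : OM -> R).
Proof. exact: (@TG_OM i.+1 _ (mcoord (ltnSn i))). Qed.
Local Open Scope ereal_scope.
Import HBNNSimple.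

Lemma int_simple (P : PM R) t (h : {nnsfun TG t >-> R}) (f : Omega -> R) :
  measurable_fun setT (f : OM -> R) -> (forall w, (0 <= f w)%R) ->
  \int[P]_(w in (setT : set OM)) ((h w * f w)%:E) =
  \sum_(y \in range h) y%:E * \int[P]_(w in (h @^-1` [set y] : set OM)) (f w)%:E.
Proof.
move=> mf f0.
have mA y : measurable (h @^-1` [set y] : set OM).
  apply: (@F_OM t); have := @measurable_sfunP _ _ _ _ h [set y] (measurable_set1 y).
  by [].
transitivity (\int[P]_(w in (setT : set OM))
   (\sum_(y \in range h) (y * \1_(h @^-1` [set y]) w * f w)%:E)).
  apply: eq_integral => w _; rewrite fsumEFin//; congr EFin.
  rewrite {1}fimfunE mulrC mulr_fsumr; apply: eq_fsbigr => y _.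
  by rewrite mulrC.
rewrite ge0_integral_fsum//; last 2 first.
- move=> y; apply/measurable_EFinP; apply: measurable_funM => //.
  apply: measurable_funM => //; exact: measurable_indic.
- move=> y w _; rewrite lee_fin; apply: mulr_ge0 => //.
  rewrite indicE; case: (boolP (w \in _)) => [|_]; last by rewrite mulr0.
  by rewrite inE /= => <-; rewrite mulr1.
apply: eq_fsbigr => y; rewrite inE => -[w0 _ hw0].
have y0 : (0 <= y)%R by rewrite -hw0; exact: fun_ge0.
under eq_integral do rewrite -mulrA EFinM.
rewrite ge0_integralZl//; last 2 first.
- apply/measurable_EFinP; apply: measurable_funM => //; exact: measurable_indic.
- move=> w _; rewrite lee_fin; apply: mulr_ge0 => //.
rewrite [in RHS]integral_mkcond; congr (_ * _); apply: eq_integral => w _.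
rewrite /patch indicE; case: (w \in _); by rewrite ?mul1r ?mul0r.
Qed.

Lemma key (P : PM R) t (Y f : Omega -> R) (c : R) :
  measurable_fun setT (Y : TG t -> R) -> (forall w, 0 <= Y w)%R ->
  measurable_fun setT (f : OM -> R) -> (forall w, 0 <= f w)%R -> (0 <= c)%R ->
  (forall C, @F R t C -> \int[P]_(w in (C : set OM)) (f w)%:E <= c%:E * P C) ->
  \int[P]_(w in (setT : set OM)) ((Y w * f w)%:E)
     <= c%:E * \int[P]_(w in (setT : set OM)) (Y w)%:E.
Proof.
move=> mY Y0 mf f0 c0 hC.
have mYe : measurable_fun setT ((fun w => (Y w)%:E) : TG t -> \bar R).
  exact/measurable_EFinP.
have Ye0 : forall w, setT w -> 0 <= (Y w)%:E by move=> w _; rewrite lee_fin.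
pose h := nnsfun_approx (measurableT : measurable (setT : set (TG t))) mYe.
have hY n w : (h n w <= Y w)%R.
  by rewrite -lee_fin /h nnsfun_approxE; exact: le_approx.
have mh n : measurable_fun setT ((h n : Omega -> R) : OM -> R).
  exact: (@TG_OM t _ (@measurable_funPT _ _ _ _ (h n))).
have mYO : measurable_fun setT (Y : OM -> R) by exact: (@TG_OM t).
have mA n y : @F R t (h n @^-1` [set y]).
  by have := @measurable_sfunP _ _ _ _ (h n) [set y] (measurable_set1 y).
have step n : \int[P]_(w in (setT : set OM)) ((h n w * f w)%:E)
     <= c%:E * \int[P]_(w in (setT : set OM)) (Y w)%:E.
  rewrite int_simple//.
  have PA0 y : 0 <= y%:E * P (h n @^-1` [set y] : set OM).
    have [y0|y0] := leP 0%R y; first by rewrite mule_ge0.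
    suff -> : (h n @^-1` [set y] : set OM) = set0 by rewrite measure0 mule0.
    apply/seteqP; split => // w /= hw.
    have : (0 <= h n w)%R by exact: fun_ge0.
    by rewrite hw leNgt y0.
  apply: (@le_trans _ _ (\sum_(y \in range (h n)) c%:E * (y%:E * P (h n @^-1` [set y] : set OM)))).
    apply: lee_fsum => // y; rewrite /= => -[w0 _ hw0].
    have y0 : (0 <= y)%R by rewrite -hw0; exact: fun_ge0.
    rewrite muleCA; apply: lee_wpmul2l; first by rewrite lee_fin.
    exact: hC.
  rewrite -ge0_mule_fsumr//; apply: lee_wpmul2l; first by rewrite lee_fin.
  apply: (@le_trans _ _ (\int[P]_(w in (setT : set OM)) ((h n w * 1)%:E))).
    rewrite (@int_simple P t (h n) (fun=> 1%R)); last 2 first.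
      exact: measurable_cst.
      by move=> _; exact: ler01.
    apply: lee_fsum => // y _; rewrite le_eqVlt; apply/orP; left; apply/eqP.
    by congr (_ * _); rewrite integral_cst//= ?mul1e//; apply: (@F_OM t).
  apply: ge0_le_integral => //.
  - by move=> w _; rewrite lee_fin mulr1.
  - by apply/measurable_EFinP; apply: measurable_funM.
  - exact/measurable_EFinP.
  - by move=> w _; rewrite lee_fin mulr1.
have -> : \int[P]_(w in (setT : set OM)) ((Y w * f w)%:E) =
    \int[P]_(w in (setT : set OM)) (limn (fun n => (h n w * f w)%:E)).
  apply: eq_integral => w _; apply/esym/cvg_lim => //.
  under eq_fun do rewrite EFinM.
  rewrite EFinM; apply: cvgeMr => //.
  exact: (@cvg_nnsfun_approx _ _ _ _ measurableT _ mYe Ye0 w).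
rewrite monotone_convergence//; last 3 first.
- by move=> n; apply/measurable_EFinP; apply: measurable_funM.
- by move=> n w _; rewrite lee_fin mulr_ge0.
- move=> w _ m n mn; rewrite lee_fin ler_wpM2r//.
  by have /lefP := @nd_nnsfun_approx _ _ _ _ measurableT _ mYe _ _ mn; apply.
apply: lime_le.
  apply: ereal_nondecreasing_is_cvgn => m n mn.
  apply: ge0_le_integral => //.
  - by move=> w _; rewrite lee_fin mulr_ge0.
  - by apply/measurable_EFinP; apply: measurable_funM.
  - by apply/measurable_EFinP; apply: measurable_funM.
  - move=> w _; rewrite lee_fin ler_wpM2r//.
    by have /lefP := @nd_nnsfun_approx _ _ _ _ measurableT _ mYe _ _ mn; apply.
by apply: nearW => n; exact: step.
Qed.

Section Mart.
Variables (P : PM R) (mu : nat -> Omega -> R) (lam : R).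
Hypothesis lam0 : (0 <= lam)%R.
Hypothesis hm : forall t, rmeasurable_wrt (@F R t) (mu t.+1).
Hypothesis hc : forall t, condexp_le P (@F R t)
  (fun w => (expR (lam * (X t.+1 w - mu t.+1 w)))%:E) (expR (lam ^+ 2 / 2))%:E.

Definition Dm t (w : Omega) : R :=
  (\sum_(i < t) (lam * (w i - mu i.+1 w) - lam ^+ 2 / 2))%R.
Definition Nm t w := expR (Dm t w).

Lemma mDm t : measurable_fun setT (Dm t : TG t -> R).
Proof.
apply: measurable_sum => i.
apply: measurable_funB => //; apply: measurable_funM => //.
apply: measurable_funB; first exact: mcoord.
apply: (@TG_mono i t _ (ltnW (ltn_ord i))).
exact: rmeas_TG.
Qed.

Lemma mNm t : measurable_fun setT (Nm t : TG t -> R).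
Proof. by apply: measurableT_comp => //; exact: mDm. Qed.

Lemma mNmO t : measurable_fun setT (Nm t : OM -> R).
Proof. by apply: (@TG_OM t); exact: mNm. Qed.

Lemma cond_hyp t C : @F R t C ->
  \int[P]_(w in (C : set OM)) (expR (lam * (w t - mu t.+1 w)))%:E
     <= (expR (lam ^+ 2 / 2))%:E * P C.
Proof.
move=> FC; have [g [[mg g0 eqg] gle]] := hc t.
have mC : measurable (C : set OM) by exact: (@F_OM t).
rewrite (eqg C FC) -integral_cst//.
apply: ae_ge0_le_integral => //.
- apply: (measurable_funS measurableT) => //.
  exact: (@TG_OMe t _ (emeas_TG mg)).
- by move=> w _; rewrite lee_fin expR_ge0.
- by apply: filterS gle => w + _.
Qed.

Lemma supermart t C : @F R t C ->
  \int[P]_(w in (C : set OM)) (Nm t.+1 w)%:E <= \int[P]_(w in (C : set OM)) (Nm t w)%:E.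
Proof.
move=> FC.
have mC : measurable (C : set OM) by exact: (@F_OM t).
pose f := fun w : Omega => expR (lam * (w t - mu t.+1 w)).
pose Y := fun w : Omega => (\1_C w * Nm t w)%R.
have mf : measurable_fun setT (f : OM -> R).
  apply: measurableT_comp => //.
  apply: measurable_funM => //; apply: measurable_funB; first exact: mcoordOM.
  apply: (@TG_OM t); exact: rmeas_TG.
have mY : measurable_fun setT (Y : TG t -> R).
  by apply: measurable_funM; [exact: measurable_indic|exact: mNm].
have Y0 w : (0 <= Y w)%R by rewrite /Y mulr_ge0 ?expR_ge0.
have k := @key P t Y f (expR (lam ^+ 2 / 2)) mY Y0 mf (fun w => expR_ge0 _)
   (expR_ge0 _) (@cond_hyp t).
have eY : \int[P]_(w in (C : set OM)) (Nm t w)%:E = \int[P]_(w in (setT : set OM)) (Y w)%:E.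
  rewrite integral_mkcond; apply: eq_integral => w _.
  by rewrite /patch /Y indicE; case: (w \in C); rewrite ?mul1r ?mul0r.
have eN : \int[P]_(w in (C : set OM)) (Nm t.+1 w)%:E =
    \int[P]_(w in (setT : set OM)) ((Y w * f w)%:E) * (expR (- (lam ^+ 2 / 2)))%:E.
  rewrite -ge0_integralZr//; last 2 first.
  - by apply/measurable_EFinP; apply: measurable_funM => //; exact: (@TG_OM t).
  - by move=> w _; rewrite lee_fin mulr_ge0 ?expR_ge0.
  rewrite [LHS]integral_mkcond; apply: eq_integral => w _.
  rewrite /patch /Y indicE; case: (w \in C); rewrite ?mul1r ?mul0r ?mul0e//.
  rewrite -EFinM /Nm /Dm big_ord_recr /= expRD /f -mulrA -expRD.
  by rewrite -!expRD addrA.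
rewrite eN eY.
apply: (@le_trans _ _ (((expR (lam ^+ 2 / 2))%:E * \int[P]_(w in (setT : set OM)) (Y w)%:E) * (expR (- (lam ^+ 2 / 2)))%:E)).
  by apply: lee_wpmul2r => //; rewrite lee_fin expR_ge0.
by rewrite muleAC -EFinM -expRD subrr expR0 mul1e.
Qed.


Lemma mlev t (a : R) : @F R t [set w | a <= Nm t w]%R.
Proof.
have := @mNm t measurableT _ (measurable_itv `[a, +oo[).
rewrite setTI; congr (_ _); apply/seteqP; split => w /=; by rewrite in_itv /= andbT.
Qed.

Definition Hs n (a : R) t := [set w : Omega | exists s, (t <= s <= n)%N /\ (a <= Nm s w)%R].

Lemma mHs n a t : measurable (Hs n a t : set OM).
Proof.
have -> : Hs n a t = \bigcup_(s in [set s | (t <= s <= n)%N]) [set w | a <= Nm s w]%R.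
  apply/seteqP; split => w /=; first by move=> [s [hs ha]]; exists s.
  by move=> [s hs ha]; exists s.
apply: bigcup_measurable => s _; apply: (@F_OM s); exact: mlev.
Qed.

Lemma doob n (a : R) : (0 < a)%R -> forall k t, (t + k = n)%N -> forall C, @F R t C ->
  a%:E * P (C `&` Hs n a t : set OM) <= \int[P]_(w in (C : set OM)) (Nm t w)%:E.
Proof.
move=> a0; elim => [|k IH] t.
  rewrite addn0 => <- C FC.
  have mC : measurable (C : set OM) by exact: (@F_OM t).
  have mL : measurable ([set w | a <= Nm t w]%R : set OM) by apply: (@F_OM t); exact: mlev.
  have -> : C `&` Hs t a t = C `&` [set w | a <= Nm t w]%R.
    apply/seteqP; split => w /= [Cw].
      by move=> [s [/andP[ts st]]]; have -> : s = t by apply/eqP; rewrite eqn_leq st ts.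
    by move=> h; split => //; exists t; rewrite leqnn.
  rewrite -integral_cst; last exact: measurableI.
  apply: (@le_trans _ _ (\int[P]_(w in (C `&` [set w | a <= Nm t w]%R : set OM)) (Nm t w)%:E)).
    apply: ge0_le_integral => //; first exact: measurableI.
    - by move=> w _; rewrite lee_fin ltW.
    - apply: (measurable_funS measurableT) => //; apply/measurable_EFinP; exact: mNmO.
    - by move=> w [_ /= h]; rewrite lee_fin.
  apply: ge0_subset_integral => //; first exact: measurableI.
  - apply: (measurable_funS measurableT) => //; apply/measurable_EFinP; exact: mNmO.
  - by move=> w _; rewrite lee_fin expR_ge0.
move=> tkn C FC.
have mC : measurable (C : set OM) by exact: (@F_OM t).
pose L := [set w | a <= Nm t w]%R.
have FL : @F R t L by exact: mlev.
have mL : measurable (L : set OM) by exact: (@F_OM t).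
have FC2 : @F R t.+1 (C `&` ~` L).
  apply: (F_mono (leqnSn t)).
  have : measurable ((C `&` ~` L) : set (TG t)) by apply: measurableI => //; exact: measurableC.
  by [].
have mC1 : measurable ((C `&` L) : set OM) by exact: measurableI.
have mC2 : measurable ((C `&` ~` L) : set OM) by apply: measurableI => //; exact: measurableC.
have ih := IH t.+1 ltac:(by rewrite addSnnS) _ FC2.
have sub : C `&` Hs n a t `<=` (C `&` L) `|` ((C `&` ~` L) `&` Hs n a t.+1).
  move=> w [Cw [s [/andP[ts sn] ha]]].
  have [aN|aN] := boolP (a <= Nm t w)%R; first by left.
  right; split; first by split => //=; apply/negP.
  exists s; rewrite sn andbT; split => //.
  rewrite ltn_neqAle ts andbT; apply/eqP => st; move: aN; rewrite st ha.
  by [].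
apply: (@le_trans _ _ (a%:E * (P (C `&` L : set OM) + P ((C `&` ~` L) `&` Hs n a t.+1 : set OM)))).
  apply: lee_wpmul2l; first by rewrite lee_fin ltW.
  apply: (@le_trans _ _ (P ((C `&` L) `|` ((C `&` ~` L) `&` Hs n a t.+1) : set OM))).
    apply: le_measure => //; rewrite inE //.
    - apply: measurableI => //; exact: mHs.
    - apply: measurableU => //; apply: measurableI => //; exact: mHs.
  apply: measureU2 => //; apply: measurableI => //; exact: mHs.
rewrite ge0_muleDr ?measure_ge0//.
have eC : C = (C `&` L) `|` (C `&` ~` L) by rewrite -setIUr setUCr setIT.
have mNt : measurable_fun (C : set OM) (fun w : OM => (Nm t w)%:E).
  apply: (measurable_funS measurableT) => //; apply/measurable_EFinP; exact: mNmO.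
rewrite [X in _ <= X](_ : _ = \int[P]_(w in (C `&` L : set OM)) (Nm t w)%:E +
                              \int[P]_(w in (C `&` ~` L : set OM)) (Nm t w)%:E); last first.
  rewrite -ge0_integral_setU //; first by rewrite -eC.
  - by rewrite -eC.
  - by move=> w _; rewrite lee_fin expR_ge0.
  - by apply/disj_set2P; rewrite setIACA setICr setI0.
apply: leeD.
  rewrite -integral_cst//.
  apply: ge0_le_integral => //.
  - by move=> w _; rewrite lee_fin ltW.
  - apply: (measurable_funS measurableT) => //; apply/measurable_EFinP; exact: mNmO.
  - by move=> w [_ /= h]; rewrite lee_fin.
apply: (le_trans ih); apply: supermart.
have : measurable ((C `&` ~` L) : set (TG t)) by apply: measurableI => //; exact: measurableC.
by [].
Qed.


Lemma ville0 n (a : R) : (0 < a)%R -> P (Hs n a 0 : set OM) <= (a^-1)%:E.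
Proof.
move=> a0.
have F0 : @F R 0 setT.
  have : measurable (setT : set (TG 0)) by exact: measurableT.
  by [].
have := @doob n a a0 n 0 (add0n n) setT F0.
rewrite setTI.
have -> : \int[P]_(w in (setT : set OM)) (Nm 0 w)%:E = 1.
  rewrite (eq_integral (cst 1)); last by move=> w _; rewrite /Nm /Dm big_ord0 expR0.
  by rewrite integral_cst// mul1e; exact: probability_setT.
move=> h.
have -> : P (Hs n a 0 : set OM) = (a^-1)%:E * (a%:E * P (Hs n a 0 : set OM)).
  by rewrite muleA -EFinM mulVf ?gt_eqF// mul1e.
rewrite -[X in _ <= X]mule1; apply: lee_wpmul2l => //.
by rewrite lee_fin invr_ge0 ltW.
Qed.

End Mart.

Definition Ssum m (w : Omega) : R := (\sum_(i < m) w i)%R.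
Definition Ev (lam a : R) m :=
  [set w : Omega | a <= expR (lam * Ssum m w - lam ^+ 2 * m%:R / 2)]%R.

Lemma mEv lam a m : @F R m (Ev lam a m).
Proof.
have mS : measurable_fun setT (Ssum m : TG m -> R).
  by apply: measurable_sum => i; exact: mcoord.
have mf : measurable_fun setT
    ((fun w => expR (lam * Ssum m w - lam ^+ 2 * m%:R / 2)) : TG m -> R).
  apply: measurableT_comp => //; apply: measurable_funB => //.
  exact: measurable_funM.
have := mf measurableT _ (measurable_itv `[a, +oo[).
rewrite setTI; congr (_ _); apply/seteqP; split => w /=; by rewrite in_itv /= andbT.
Qed.

Lemma villeP (P : PM R) (mu : nat -> Omega -> R) (lam a : R) :
  (0 <= lam)%R -> (0 < a)%R ->
  (forall t, rmeasurable_wrt (@F R t) (mu t.+1)) ->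
  (forall t, condexp_le P (@F R t)
     (fun w => (expR (lam * (X t.+1 w - mu t.+1 w)))%:E) (expR (lam ^+ 2 / 2))%:E) ->
  (forall t, (1 <= t)%N -> {ae P, forall w : OM, \sum_(1 <= i < t.+1) mu i w <= 0}%R) ->
  P (\bigcup_m Ev lam a m : set OM) <= (a^-1)%:E.
Proof.
move=> lam0 a0 hm hc hg.
have : {ae P, forall w : OM, forall t, (1 <= t)%N -> \sum_(1 <= i < t.+1) mu i w <= 0}%R.
  apply: ae_foralln => t; case: t => [|t]; first by apply: nearW.
  by apply: filterS (hg t.+1 isT) => w h _.
move=> [Nb [mNb PNb sNb]].
pose U n := [set w : Omega | exists m, (m <= n)%N /\ Ev lam a m w].
have mU n : measurable (U n : set OM).
  have -> : U n = \bigcup_(m in [set m | (m <= n)%N]) Ev lam a m.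
    apply/seteqP; split => w /=; first by move=> [m [hm1 hm2]]; exists m.
    by move=> [m hm1 hm2]; exists m.
  apply: bigcup_measurable => m _; apply: (@F_OM m); exact: mEv.
have PU n : P (U n : set OM) <= (a^-1)%:E.
  apply: (@le_trans _ _ (P (Hs mu lam n a 0 `|` Nb : set OM))).
    apply: le_measure; rewrite ?inE//; first by apply: measurableU => //; exact: mHs.
    move=> w [m [mn hE]].
    have [gw|ngw] := pselect (forall t, (1 <= t)%N ->
        (\sum_(1 <= i < t.+1) mu i w <= 0)%R); last by right; exact: sNb.
    left; exists m; split; first by rewrite leq0n.
    apply: (le_trans hE); rewrite ler_expR /Dm /Ssum.
    rewrite sumrB -sumrB big_split /= sumr_const card_ord -mulr_sumr.
    rewrite sumrB mulrBr.
    have hmu : (\sum_(i < m) mu i.+1 w <= 0)%R.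
      case: m {mn hE} => [|m]; first by rewrite big_ord0.
      by have := gw m.+1 isT; rewrite big_add1 big_mkord.
    have := mulr_ge0_le0 lam0 hmu.
    rewrite mulNrn.
    have -> : (lam ^+ 2 / 2 *+ m = lam ^+ 2 * m%:R / 2)%R by rewrite -mulr_natr mulrAC.
    move: (lam * _)%R (lam * \sum_(i < m) _)%R (lam ^+ 2 * m%:R / 2)%R => x y z.
    lra.
  apply: (le_trans (measureU2 _ _ _)) => //; first exact: mHs.
  apply: (@le_trans _ _ (P (Hs mu lam n a 0 : set OM))); last exact: ville0.
  rewrite -[leRHS]adde0; apply: leeD => //.
  by rewrite -PNb.
have eqU : \bigcup_m Ev lam a m = \bigcup_n U n.
  apply/seteqP; split => w /=; first by move=> [m _ h]; exists m => //; exists m.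
  by move=> [n _ [m [_ h]]]; exists m.
have mUU : measurable (\bigcup_n U n : set OM) by exact: bigcup_measurable.
have nd : {homo U : n m / (n <= m)%N >-> (n <= m)%O}.
  move=> n m nm; apply/subsetPset => w [k [kn h]]; exists k; split => //.
  exact: leq_trans nm.
have hc2 := @nondecreasing_cvg_mu _ _ _ P U mU mUU nd.
rewrite eqU -(cvg_lim _ hc2) //.
apply: lime_le; first by apply/cvg_ex; exists (P (\bigcup_n U n : set OM)).
by apply: nearW.
Qed.

Lemma apos_ev (A : nat -> R) w : @Apos R w -> exists k m, Ev ((k.+1%:R)^-1) (A k) m w.
Proof.
rewrite /Apos /=; set u := (fun n : nat => _); set L := limn_esup u => hw.
have [c [c0 cu]] : exists c : R, (0 < c)%R /\ (c%:E < L).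
  move: hw; case: L => [r| |] //.
  - move=> r0; have {}r0 : (0 < r)%R by rewrite -lte_fin.
    exists (r / 2)%R; split; rewrite ?lte_fin; lra.
  - by move=> _; exists 1%R; split => //; exact: ltry.
have hN N : exists2 n, (N <= n)%N & (c%:E < u n).
  have : c%:E < esups u N.
    apply: (lt_le_trans cu); rewrite /L limn_esup_lim (cvg_lim _ (@cvg_esups_inf _ u))//.
    by apply: ereal_inf_lbound; exists N.
  by rewrite /esups /= => /ereal_sup_gt [y [n Nn <-] cy]; exists n.
pose k := Num.Def.archi_bound c^-1.
pose lam := ((k.+1)%:R^-1 : R)%R.
have lam0 : (0 < lam)%R by rewrite /lam invr_gt0 ltr0n.
have lamc : (lam <= c)%R.
  rewrite /lam -[X in (X <= _)%R]mulr1 ler_pdivrMl ?ltr0n//.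
  have ci0 : (0 <= c^-1)%R by rewrite invr_ge0 ltW.
  have := @archi_boundP _ c^-1 ci0.
  rewrite -/k => h.
  have h2 : (1 < k%:R * c)%R.
    by rewrite -(@ltr_pM2r _ c^-1) ?invr_gt0// -mulrA divff ?gt_eqF// mulr1 mul1r.
  apply: (le_trans (ltW h2)); rewrite ler_pM2r// ler_nat//.
exists k.
pose N := Num.Def.archi_bound (2 * A k / (lam * c))%R.
have [n Nn cun] := hN N.
exists n.+1; rewrite /Ev /= -/lam.
have [Ak0|Ak0] := leP 0%R (A k); last by apply: (le_trans (ltW Ak0)); exact: expR_ge0.
have lc0 : (0 < lam * c)%R by rewrite mulr_gt0.
have hNb : (2 * A k / (lam * c) < n.+1%:R)%R.
  apply: (lt_le_trans (@archi_boundP _ _ _)).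
    by apply: mulr_ge0; [apply: mulr_ge0|rewrite invr_ge0; exact: ltW].
  by rewrite ler_nat -/N ltnS ltnW.
have eS : Ssum n.+1 w = (\sum_(1 <= s < n.+2) X s w)%R.
  by rewrite /Ssum big_add1 /= big_mkord.
move: cun; rewrite /u lte_fin -eS ltr_pdivlMl ?ltr0n// => cS.
set m := (n.+1%:R : R) in hNb cS *.
set S := Ssum n.+1 w in cS *.
have m0 : (0 < m)%R by rewrite /m ltr0n.
have h1 : (lam * (m * c) <= lam * S)%R by rewrite ler_pM2l// ltW.
have h2 : (lam * lam * m <= lam * c * m)%R by rewrite ler_pM2r// ler_pM2l.
have h3 : (2 * A k < lam * c * m)%R by rewrite -ltr_pdivrMl// mulrC.
apply: (le_trans _ (expR_ge1Dx _)).
have -> : (lam ^+ 2 * m / 2 = (lam * lam * m) / 2)%R by rewrite expr2.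
have e : (lam * (m * c) = lam * c * m)%R by rewrite mulrA mulrAC.
rewrite e in h1.
move: h1 h2 h3; move: (lam * S)%R (lam * lam * m)%R (lam * c * m)%R => x y z.
lra.
Qed.

Definition lamk k : R := ((k.+1)%:R^-1)%R.
Definition ak (eps : R) k : R := ((2 ^ k.+1)%:R / eps)%R.
Definition EvA eps m := [set w : Omega | exists k, Ev (lamk k) (ak eps k) m w].

Definition tauf eps (w : Omega) : option nat :=
  match pselect (exists m, `[< EvA eps m w >]) with
  | left h => Some (ex_minn h)
  | right _ => None
  end.

Lemma FEvA eps m : @F R m (EvA eps m).
Proof.
have -> : EvA eps m = \bigcup_k Ev (lamk k) (ak eps k) m.
  by apply/seteqP; split => w /= [k]; [exists k|move=> _; exists k].
have : measurable (\bigcup_k Ev (lamk k) (ak eps k) m : set (TG m)).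
  by apply: bigcup_measurable => k _; exact: mEv.
by [].
Qed.

Lemma tau_eq eps n : [set w | tauf eps w = Some n] =
  EvA eps n `&` ~` (\bigcup_(m in [set m | (m < n)%N]) EvA eps m).
Proof.
apply/seteqP; split => w /=; rewrite /tauf.
  case: pselect => // h [<-]; case: ex_minnP => m /asboolP Em mmin; split => //.
  move=> [j /= jm /asboolP Ej]; have := mmin j Ej; by rewrite leqNgt jm.
move=> [En nE]; case: pselect => [h|]; last first.
  by move=> nex; exfalso; apply: nex; exists n; exact/asboolP.
case: ex_minnP => m /asboolP Em mmin; congr Some.
apply/eqP; rewrite eqn_leq mmin ?andbT; last exact/asboolP.
rewrite leqNgt; apply/negP => mn; apply: nE; by exists m.
Qed.

Lemma tau_stop eps : stopping_time (tauf eps).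
Proof.
move=> n; rewrite tau_eq.
have : measurable (EvA eps n `&` ~` (\bigcup_(m in [set m | (m < n)%N]) EvA eps m)
    : set (TG n)).
  apply: measurableI; first exact: FEvA.
  apply: measurableC; apply: bigcup_measurable => m /= mn.
  have : @F R n (EvA eps m) by apply: (F_mono (ltnW mn)); exact: FEvA.
  by [].
by [].
Qed.

Lemma tau_fin eps : finite_tau (tauf eps) = \bigcup_m EvA eps m.
Proof.
apply/seteqP; split => w /=; rewrite /finite_tau /tauf /=.
  by case: pselect => // -[m /asboolP h] _; exists m.
by move=> [m _ h]; case: pselect => // -[]; exists m; exact/asboolP.
Qed.

Lemma apos_sub (eps : R) : @Apos R `<=` finite_tau (tauf eps).
Proof.
move=> w /(apos_ev (ak eps)) [k [m h]]; rewrite tau_fin; exists m => //.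
by exists k.
Qed.

Lemma tau_bound (eps : R) (P : PM R) : (0 < eps)%R -> @Pdagger R P ->
  P (finite_tau (tauf eps) : set OM) <= eps%:E.
Proof.
move=> e0 [mu H].
have hm t : rmeasurable_wrt (@F R t) (mu t.+1) by have [[]] := H t.+1 isT.
have hc lam t : condexp_le P (@F R t)
    (fun w => (expR (lam * (X t.+1 w - mu t.+1 w)))%:E) (expR (lam ^+ 2 / 2))%:E.
  by have [_ _] := H t.+1 isT; apply.
have hg t : (1 <= t)%N -> {ae P, forall w : OM, \sum_(1 <= i < t.+1) mu i w <= 0}%R.
  by move=> t1; have [] := H t t1.
pose G k := \bigcup_m Ev (lamk k) (ak eps k) m.
have mG k : measurable (G k : set OM).
  by apply: bigcup_measurable => m _; apply: (@F_OM m); exact: mEv.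
have eq : finite_tau (tauf eps) = \bigcup_k G k.
  rewrite tau_fin; apply/seteqP; split => w /=.
    by move=> [m _ [k h]]; exists k => //; exists m.
  by move=> [k _ [m _ h]]; exists m => //; exists k.
rewrite eq.
apply: (le_trans (measure_sigma_subadditive P (F := G) mG _ _)).
- exact: bigcup_measurable.
- by [].
have et := @epsilon_trick _ (fun=> 0) eps xpredT (fun=> lexx 0) (ltW e0).
rewrite (@eseries0 _ (fun=> 0%E) 0 xpredT) // add0e in et.
apply: le_trans et.
apply: lee_nneseries => // k _.
rewrite add0e.
have := @villeP P mu (lamk k) (ak eps k) _ _ hm (hc (lamk k)) hg.
rewrite /ak invf_div.
apply.
- by rewrite /lamk invr_ge0.
- by rewrite divr_gt0 // ltr0n expn_gt0.
Qed.

Lemma Ple0_sub : @Ple0 R `<=` @Pdagger R.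
Proof.
move=> P [mu H]; exists mu => t t1; have [h1 h2 h3] := H t t1; split => //.
have : {ae P, forall w : OM, forall i, (1 <= i)%N -> mu i w <= 0}%R.
  apply: ae_foralln => i; case: i => [|i]; first by apply: nearW.
  by have [_ hi _] := H i.+1 isT; apply: filterS hi => w h _.
apply: filterS => w h.
rewrite big_nat; apply: sumr_le0 => i /andP[i1 _]; exact: h.
Qed.

Definition w0 : OM := (fun _ => 0%R) : Omega.
Definition P0 : PM R := (@dirac _ OM w0 R : probability OM R).

Lemma rmeas_cst t (r : R) : rmeasurable_wrt (@F R t) (fun _ => r).
Proof.
move=> B mB; have := @measurable_cst _ _ (TG t) _ setT r measurableT B mB.
by rewrite setTI.
Qed.

Lemma emeas_cst t (r : \bar R) : emeasurable_wrt (@F R t) (fun _ => r).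
Proof.
move=> B mB; have := @measurable_cst _ _ (TG t) _ setT r measurableT B mB.
by rewrite setTI.
Qed.

Lemma P0_Ple0 : @Ple0 R P0.
Proof.
exists (fun _ _ => 0%R) => t t1; split.
- split; first exact: rmeas_cst.
  exists (fun=> 0), (fun=> 0); split.
  + split; [exact: emeas_cst|by []|] => B FB.
    have mB : measurable (B : set OM) by exact: (@F_OM t.-1).
    rewrite integral0 /P0 integral_dirac //; last first.
      apply: (measurable_funS measurableT) => //; apply/measurable_EFinP.
      by apply: measurable_maxr => //; exact: mcoordOM.
    by rewrite /X /w0 /= maxxx mule0.
  + split; [exact: emeas_cst|by []|] => B FB.
    have mB : measurable (B : set OM) by exact: (@F_OM t.-1).
    rewrite integral0 /P0 integral_dirac //; last first.
      apply: (measurable_funS measurableT) => //; apply/measurable_EFinP.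
      apply: measurable_maxr => //; apply: measurableT_comp => //; exact: mcoordOM.
    by rewrite /X /w0 /= oppr0 maxxx mule0.
  + by apply: aeW => w; exact: ltry.
  + by apply: aeW => w; exact: ltry.
  + by apply: aeW => w; rewrite sube0.
- by apply: aeW => w.
- move=> lam; exists (fun=> 1); split.
    split; [exact: emeas_cst|by []|] => B FB.
    have mB : measurable (B : set OM) by exact: (@F_OM t.-1).
    rewrite (@integral_cst _ OM _ P0 (B : set OM) mB 1) /P0 integral_dirac //; last first.
      apply: (measurable_funS measurableT) => //; apply/measurable_EFinP.
      apply: measurableT_comp => //; apply: measurable_funM => //.
      apply: measurable_funB => //; exact: mcoordOM.
    by rewrite /X /w0 /= subrr mulr0 expR0 mule1 mul1e.
  apply: aeW => w; rewrite lee_fin.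
  apply: le_trans (expR_ge1Dx _); rewrite lerDl.
  by rewrite divr_ge0 // sqr_ge0.
Qed.

Lemma mu_star0 (Q : set (PM R)) : Q `<=` @Pdagger R -> Q P0 -> mu_star Q (@Apos R) = 0.
Proof.
move=> QD QP0; apply/eqP; rewrite eq_le; apply/andP; split.
  apply/lee_addgt0Pr => e e0; rewrite add0e.
  apply: (@le_trans _ _ (ereal_sup [set y | exists P : PM R, Q P /\ y = P (finite_tau (tauf e) : set OM)])).
    by apply: ereal_inf_lbound; exists (tauf e); split; [exact: tau_stop|exact: apos_sub|].
  apply: ub_ereal_sup => y [P [QP ->]]; apply: tau_bound => //; exact: QD.
apply/ereal_infP => x [tau [st sub ->]].
apply: le_trans (ereal_sup_ubound _); last by exists P0; split.
exact: measure_ge0.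
Qed.
End S.

Theorem mainTheorem13 (R : realType) :
  [/\ mu_star (@Pdagger R) (@Apos R) = 0%E,
      @Ple0 R `<=` @Pdagger R &
      mu_star (@Ple0 R) (@Apos R) = 0%E].
Proof.
have h := @Ple0_sub R.
split => //.
- by apply: mu_star0 => //; apply: h; exact: P0_Ple0.
- by apply: mu_star0 => //; exact: P0_Ple0.
Qed.
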